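(* Let $m\ge 2$, let $f(t)=t^m-\sum_{s=0}^{m-1}u_{m-s}t^s$ with $u_1,\dots,u_m\in\mathbb{Q}$ have $m$ distinct nonzero roots $\alpha_1,\dots,\alpha_m$, let $\mathbf{x}=(x_0,\dots,x_{m-1})\in\mathbb{Q}^m$ and $M=\sum_{n=0}^{m-1}x_nA^n$ with $A$ the companion matrix of $f$. Then for every $n\ge1$ for which the denominators are nonzero, $$\frac{M^n_{m,m-1}}{M^n_{1,m}}=\frac{M^n_{m,1}}{M^n_{1,2}}=\frac{1}{(-1)^{m-1}\prod_{h=1}^m\alpha_h};$$ in particular these ratios do not depend on $n$.
   Context: The companion matrix $A=(A_{a,b})$ of $f(t)=t^m-\sum_{s=0}^{m-1}u_{m-s}t^s$ is the $m\times m$ matrix with $A_{a+1,a}=1$ for $a=1,\dots,m-1$, last column $(A_{1,m},\dots,A_{m,m})^T=(u_m,u_{m-1},\dots,u_1)^T$, and all other entries $0$. $M^n_{a,b}$ denotes the $(a,b)$-entry of the $n$-th power of $M$. *)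

(* Defs.v *)
From HB Require Import structures.
From mathcomp Require Import all_boot all_order all_algebra all_field.
Set Implicit Arguments. Unset Strict Implicit. Unset Printing Implicit Defensive.
Import Order.TTheory GRing.Theory Num.Theory.
Local Open Scope ring_scope.

Definition fpoly (m : nat) (u : nat -> rat) : {poly rat} :=
  'X^m - \sum_(s < m) (u (m - s)%N)%:P * 'X^s.

(* Companion matrix (0-based indices i,j stand for 1-based a = i+1, b = j+1):
   A_{a+1,a} = 1, last column (A_{1,m},...,A_{m,m}) = (u_m,...,u_1),
   A_{a,m} = u_{m-a+1} i.e. entry (i, m-1) = u (m - i). *)
Definition companion (m : nat) (u : nat -> rat) : 'M[rat]_m :=
  \matrix_(i < m, j < m)
    (if j.+1 == m then u (m - i)%N else if i == j.+1 :> nat then 1 else 0).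

(* M = sum_{n=0}^{m-1} x_n A^n, for m = k.+1 (so that 'M_m is a ring). *)
Definition Mmat (k : nat) (u : nat -> rat) (x : nat -> rat) : 'M[rat]_k.+1 :=
  \sum_(n < k.+1) x n *: (companion k.+1 u) ^+ n.

Definition ent (k : nat) (B : 'M[rat]_k.+1) (a b : nat) : rat :=
  B (inord a.-1) (inord b.-1).

(* Main.v *)
Require Import Defs.
From HB Require Import structures.
From mathcomp Require Import all_boot all_order all_algebra all_field.
From mathcomp Require Import zify.
Import Order.TTheory GRing.Theory Num.Theory.
Local Open Scope ring_scope.

Lemma urel (k : nat) (u : nat -> rat) (alpha : 'I_k.+2 -> algC)
  (f_roots : map_poly ratr (fpoly k.+2 u) = \prod_(h < k.+2) ('X - (alpha h)%:P)) :
  ratr (u k.+2) = (-1) ^+ k.+1 * \prod_(h < k.+2) alpha h.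
Proof.
have := congr1 (fun p => p.[0]) f_roots => /=.
rewrite -(rmorph0 (ratr : rat -> algC)) horner_map horner_prod /fpoly.
rewrite hornerD hornerN hornerXn horner_sum expr0n /=.
rewrite big_ord_recl big1 => [|i _]; last by rewrite hornerCM hornerXn expr0n mulr0.
rewrite hornerCM hornerXn expr0n mulr1 addr0 subn0.
rewrite rmorph0 (_ : 0 - u k.+2 = - u k.+2) ?sub0r // rmorphN.
under eq_bigr do rewrite hornerXsubC rmorph0 sub0r.
rewrite prodrN card_ord => /eqP; rewrite eqr_oppLR => /eqP ->.
by rewrite exprS mulN1r mulNr opprK.
Qed.

Lemma comm_entry k u (P : 'M[rat]_k.+2) :
  companion k.+2 u *m P = P *m companion k.+2 u -> forall j, (j < k.+1)%N ->
  P (inord 0) (inord j.+1) = u k.+2 * P (inord k.+1) (inord j).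
Proof.
move=> /matrixP H j hj; have := H (inord 0) (inord j); rewrite !mxE.
rewrite (bigD1 ord_max) //= big1 => [|b nb]; last first.
  rewrite mxE inordK //= ifF; last first.
    apply/negbTE; apply: contra nb => /eqP hb; apply/eqP/val_inj => /=; lia.
  by rewrite mul0r.
rewrite (bigD1 (inord j.+1)) //= big1 => [|b nb]; last first.
  rewrite mxE inordK; last lia.
  rewrite ifF; last by apply/negbTE; lia.
  rewrite ifF ?mulr0 //; apply/negbTE; apply: contra nb => /eqP hb.
  by apply/eqP/val_inj; rewrite /= inordK //; lia.
rewrite !mxE /= !inordK //; try lia.
rewrite eqxx ifF; last by apply/negbTE; lia.
rewrite eqxx addr0 addr0 mulr1 subn0 => <-.
by rewrite (_ : inord k.+1 = ord_max) //; apply/val_inj; rewrite /= inordK.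
Qed.
Theorem mainTheorem3 (k : nat) (u x : nat -> rat) (alpha : 'I_k.+2 -> algC)
  (alpha_inj : injective alpha)
  (alpha_nz : forall h, alpha h != 0)
  (f_roots : map_poly ratr (fpoly k.+2 u) = \prod_(h < k.+2) ('X - (alpha h)%:P))
  (n : nat) (hn : (1 <= n)%N)
  (d1 : ent (Mmat k.+1 u x ^+ n) 1 k.+2 != 0)
  (d2 : ent (Mmat k.+1 u x ^+ n) 1 2 != 0) :
  let c := 1 / ((-1) ^+ (k.+2 - 1) * \prod_(h < k.+2) alpha h) in
  ratr (ent (Mmat k.+1 u x ^+ n) k.+2 k.+1) / ratr (ent (Mmat k.+1 u x ^+ n) 1 k.+2) = c /\
  ratr (ent (Mmat k.+1 u x ^+ n) k.+2 1) / ratr (ent (Mmat k.+1 u x ^+ n) 1 2) = c.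

Proof.
move=> c.
set P := Mmat k.+1 u x ^+ n.
have cP : companion k.+2 u *m P = P *m companion k.+2 u.
  rewrite mulmxE; apply: commrX; rewrite /Mmat; apply: commr_sum => i _.
  rewrite /GRing.comm -scalerAl -scalerAr; congr (_ *: _).
  exact/commrX/commr_refl.
have hu := @urel k u alpha f_roots.
have e1 := @comm_entry k u P cP _ (ltnSn k).
have e2 := @comm_entry k u P cP _ (ltn0Sn k).
have E1 : ent P k.+2 k.+1 = P (inord k.+1) (inord k) by [].
have E2 : ent P 1 k.+2 = P (inord 0) (inord k.+1) by [].
have E3 : ent P k.+2 1 = P (inord k.+1) (inord 0) by [].
have E4 : ent P 1 2 = P (inord 0) (inord 1) by [].
rewrite -/P in d1 d2 *.
rewrite /c subn1 -hu E1 E2 E3 E4.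
rewrite E2 e1 in d1; rewrite E4 e2 in d2.
move: d1 d2; rewrite !mulf_eq0 !negb_or => /andP[un p1] /andP[_ p2].
have L : forall a b : algC, b != 0 -> b / (a * b) = 1 / a.
  by move=> a b hb; rewrite invfM mulrCA divff // mulr1 div1r.
by rewrite e1 e2 !rmorphM /= !L // fmorph_eq0.
Qed.
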